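(* Let $q\ge 8$ be a power of two and $\Omega=\{0,1,\ldots,q-1\}$. Let $\sigma_1$ be the identity permutation, $\sigma_1(i)=i$, and let $\sigma_2(i) = (5i+2) \bmod q$ for $0\le i<q$. Then $\sigma_2$ is a permutation of $\Omega$ and $(\sigma_1,\sigma_2)$ is a nice pair of permutations.
   Context: For a permutation $\sigma$ of a $q$-element set $\Omega$ and $0 \le i < q$, $\sigma(i)$ denotes the element in position $i$. Given two permutations $\sigma_1,\sigma_2$ of $\Omega$, form the $2\times q$ array whose first row is $\sigma_1(0),\ldots,\sigma_1(q-1)$ and whose second row is $\sigma_2(0),\ldots,\sigma_2(q-1)$. Each $a\in\Omega$ occurs once in each row. If $a=\sigma_1(i)$, its first-row neighbors are $l_1=\sigma_1(i-1 \bmod q)$, $r_1=\sigma_1(i+1 \bmod q)$ and the down-neighbor $d=\sigma_2(i)$. If $a=\sigma_2(j)$, its second-row neighbors are $l_2=\sigma_2(j-1\bmod q)$, $r_2=\sigma_2(j+1 \bmod q)$ and the up-neighbor $u=\sigma_1(j)$. The pair $(\sigma_1,\sigma_2)$ is called a nice pair if for every $a\in\Omega$ the six elements $l_1,r_1,d,l_2,r_2,u$ are pairwise distinct. *)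

(* Defs.v *)
From mathcomp Require Import all_boot.
Set Implicit Arguments. Unset Strict Implicit. Unset Printing Implicit Defensive.

(* Omega = {0,...,q-1} is modelled by 'I_q; positions 0 <= i < q are also 'I_q.
   ordS / ord_pred are the cyclic successor / predecessor (i+1 mod q, i-1 mod q). *)

(* (s1, s2) is a nice pair: both are permutations of Omega, and for every a,
   with a = s1 i and a = s2 j, the six elements l1 r1 d l2 r2 u are pairwise distinct. *)
Definition nice_pair (q : nat) (s1 s2 : 'I_q -> 'I_q) : Prop :=
  [/\ bijective s1, bijective s2 &
   forall (a : 'I_q) (i j : 'I_q), s1 i = a -> s2 j = a ->
     uniq [:: s1 (ord_pred i); s1 (ordS i); s2 i;
              s2 (ord_pred j); s2 (ordS j); s1 j]].

Definition sigma1 (q : nat) : 'I_q -> 'I_q := fun i => i.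

(* sigma_2(i) = (5 i + 2) mod q; q > 0 follows from the existence of i. *)
Definition sigma2 (q : nat) : 'I_q -> 'I_q := fun i =>
  Ordinal (ltn_pmod (5 * i + 2) (leq_ltn_trans (leq0n i) (ltn_ord i))).

(* Main.v *)
Require Import Defs.
From mathcomp Require Import all_boot.
From mathcomp Require Import zify.

Lemma modq8 (q x : nat) : 8 %| q -> (x %% q) %% 8 = x %% 8.
Proof. by move=> h; rewrite modn_dvdm. Qed.

Lemma sigma2_inj q k : q = 2 ^ k -> injective (@sigma2 q).
Proof.
move=> hq.
have cop : coprime q 5 by rewrite hq coprimeXl.
suff H : forall x y : 'I_q, y <= x -> sigma2 x = sigma2 y -> x = y.
  move=> x y e; case: (leqP y x) => h; first exact: H.
  by apply/esym/H; [apply: ltnW|].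
move=> x y le e; move/(congr1 val): e => /= /eqP.
rewrite eqn_modDr eqn_mod_dvd ?leq_mul2l ?le // -mulnBr Gauss_dvdr // => hd.
apply/val_inj/eqP; rewrite eqn_leq le andbT -subn_eq0.
have : x - y < q by apply: leq_ltn_trans (leq_subr _ _) (ltn_ord x).
move: hd; case: (x - y) => // n hd lt.
have := dvdn_leq (ltn0Sn n) hd; lia.
Qed.

Theorem mainTheorem3 (q k : nat) (hq : q = 2 ^ k) (h8 : 8 <= q) :
  bijective (@sigma2 q) /\ nice_pair (@sigma1 q) (@sigma2 q).
Proof.
have bij2 : bijective (@sigma2 q) by apply: injF_bij; exact: sigma2_inj hq.
split => //; split => //; first by exists id.
have d8 : 8 %| q.
  rewrite hq; have k3 : 3 <= k.
    case: k hq h8 => [|[|[|k]]] -> //.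
  by rewrite -(subnKC k3) expnD dvdn_mulr.
move=> a i j <- hj.
rewrite -(map_inj_uniq val_inj).
apply: (@map_uniq _ _ (fun x => x %% 8)).
have hi : nat_of_ord i = (5 * j + 2) %% q by move: (congr1 val hj).
rewrite /sigma1 /sigma2 /= hi.
rewrite !modq8 //.
have f0 := @modq8 q (5 * j + 2) d8.
have f1 := @modq8 q (j + q).-1 d8.
have f2 := @modq8 q j.+1 d8.
move: d8 => /dvdnP [m hm].
move: f0 f1 f2.
move: ((5 * j + 2) %% q) ((j + q).-1 %% q) (j.+1 %% q) => t0 t1 t2 f0 f1 f2.
have -> : (t0 + q).-1 %% 8 = (5 * (j %% 8) + 1) %% 8 by lia.
have -> : t0.+1 %% 8 = (5 * (j %% 8) + 3) %% 8 by lia.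
have -> : (5 * t0 + 2) %% 8 = (j %% 8 + 4) %% 8 by lia.
have -> : (5 * t1 + 2) %% 8 = (5 * (j %% 8) + 5) %% 8 by lia.
have -> : (5 * t2 + 2) %% 8 = (5 * (j %% 8) + 7) %% 8 by lia.
have : j %% 8 < 8 by rewrite ltn_mod.
by case: (j %% 8) => [|[|[|[|[|[|[|[|]]]]]]]].
Qed.
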